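(* Let $q$ be a prime power, $l\ge1$, $t=q^l$, $G_6(x)=x^{t+1}+1$, and $L_6=\{\alpha\in GF(t^2):\ G_6(\alpha)\ne0\}$. For every integer $i$ with $1<i<q-1$, the minimum distance of the $q$-ary Goppa code $\Gamma_6^{(i)}=\Gamma(L_6,G_6^{\,i})$ equals $i(t+1)+1$.
   Context: For a set $L=\{\alpha_1,\dots,\alpha_n\}$ of distinct elements of $GF(t^2)$ and $P\in GF(t^2)[x]$ with $P(\alpha_k)\neq0$ for all $k$, the $q$-ary Goppa code is $\Gamma(L,P)=\{c\in GF(q)^n:\ \sum_k \frac{c_k}{x-\alpha_k}\equiv 0 \pmod{P(x)}\}$; its minimum distance is the minimum Hamming weight of a nonzero codeword. *)

(* Defs.v *)
From HB Require Import structures.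
From mathcomp Require Import all_boot all_order all_algebra all_field.
Set Implicit Arguments. Unset Strict Implicit. Unset Printing Implicit Defensive.
Import GRing.Theory.
Local Open Scope ring_scope.

(* q-ary Goppa code Gamma(L, P): the locator field F = GF(t^2), the symbol
   field K = GF(q), embedded into F by the field morphism f.
   A word is c : {ffun F -> K} supported on L (coordinates indexed by the
   elements of L). The condition sum_k c_k/(x - a_k) = 0 mod P is expressed
   in F[x]/(P): for a family u of inverses of (x - a) modulo P (a in L),
   P divides sum_{a in L} c_a u_a. *)
Definition goppa_code (K F : finFieldType) (f : {rmorphism K -> F})
  (L : {set F}) (P : {poly F}) (c : {ffun F -> K}) : Prop :=
    (forall a, a \notin L -> c a = 0) /\
    (exists u : F -> {poly F},
          (forall a, a \in L -> P %| ('X - a%:P) * u a - 1) /\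
          P %| \sum_(a in L) f (c a) *: u a).

Definition hweight (K F : finFieldType) (c : {ffun F -> K}) : nat :=
  #|[set a | c a != 0]|.

Definition min_distance (K F : finFieldType) (C : {ffun F -> K} -> Prop) (d : nat) : Prop :=
  (exists2 c, C c & (c != 0) /\ hweight c = d) /\
  (forall c, C c -> c != 0 -> (d <= hweight c)%N).

Definition G6 (F : finFieldType) (t : nat) : {poly F} := 'X^(t.+1) + 1.

Definition L6 (F : finFieldType) (t : nat) : {set F} := [set a | (G6 F t).[a] != 0].

(* Main.v *)
Require Import Defs.
From HB Require Import structures.
From mathcomp Require Import all_boot all_order all_algebra all_field.
From mathcomp Require Import zify.
Set Implicit Arguments. Unset Strict Implicit. Unset Printing Implicit Defensive.
Import GRing.Theory.
Local Open Scope ring_scope.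
Section Gen.
Variable F : finFieldType.

Definition PX (A : {set F}) : {poly F} := \prod_(b in A) ('X - b%:P).

Lemma size_PX (A : {set F}) : size (PX A) = #|A|.+1.
Proof. by rewrite /PX -big_enum size_prod_XsubC cardE. Qed.

Lemma monic_PX (A : {set F}) : PX A \is monic.
Proof. exact: monic_prod_XsubC. Qed.

Lemma PX_D1 (A : {set F}) a : a \in A -> PX A = ('X - a%:P) * PX (A :\ a).
Proof. by move=> aA; rewrite /PX (big_setD1 a aA). Qed.

Lemma root_PX (A : {set F}) x : root (PX A) x = (x \in A).
Proof.
rewrite /PX -big_enum root_prod_XsubC mem_enum. done.
Qed.

Lemma dvdp_big (I : Type) (r : seq I) (Pr : pred I) (G : I -> {poly F}) (P : {poly F}) :
  (forall i, Pr i -> P %| G i) -> P %| \sum_(i <- r | Pr i) G i.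
Proof.
move=> H; apply: (big_ind (fun x => P %| x)) => //.
by move=> x y; apply: dvdp_add.
Qed.

Lemma key_cong (P : {poly F}) (L S : {set F}) (c : F -> F) (u : F -> {poly F}) :
  (forall a, a \in L -> P %| ('X - a%:P) * u a - 1) ->
  S \subset L -> (forall a, a \in L -> a \notin S -> c a = 0) ->
  P %| PX S * (\sum_(a in L) c a *: u a) - \sum_(a in S) c a *: PX (S :\ a).
Proof.
move=> Hu SL Hc.
have -> : \sum_(a in L) c a *: u a = \sum_(a in S) c a *: u a.
  rewrite (big_setID S) /= (setIidPr SL) [X in _ + X]big1 ?addr0 // => a.
  by rewrite !inE => /andP[aS aL]; rewrite Hc ?scale0r.
rewrite mulr_sumr -sumrB; apply: dvdp_big => a aS.
rewrite (PX_D1 aS) -scalerAr -scalerBr -mulrA mulrCA -[X in _ - X]mulr1 -mulrBr.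
rewrite -mul_polyC; apply: dvdp_mull; apply: dvdp_mull; apply: Hu.
exact: (subsetP SL).
Qed.

Lemma eval_R (S : {set F}) (d : F -> F) b : b \in S ->
  (\sum_(a in S) d a *: PX (S :\ a)).[b] = d b * (PX (S :\ b)).[b].
Proof.
move=> bS; rewrite horner_sum (big_setD1 b bS) /= hornerZ big1 ?addr0 //.
move=> a; rewrite !inE => /andP[ab aS]; rewrite hornerZ.
have /rootP -> : root (PX (S :\ a)) b by rewrite root_PX !inE eq_sym ab.
by rewrite mulr0.
Qed.

Lemma PX_nz_at (S : {set F}) b : (PX (S :\ b)).[b] != 0.
Proof. by rewrite -/(root _ _) root_PX !inE eqxx. Qed.

Lemma size_R (S : {set F}) (d : F -> F) :
  (size (\sum_(a in S) d a *: PX (S :\ a))%R <= #|S|)%N.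
Proof.
apply: (leq_trans (size_sum _ _ _ : _ <= _)%N); apply/bigmax_leqP => a aS.
apply: (leq_trans (size_scale_leq _ _)); rewrite size_PX.
by rewrite (cardsD1 a S) aS.
Qed.

Lemma u_exists (P : {poly F}) (L : {set F}) :
  (forall a, a \in L -> ~~ root P a) ->
  exists u : F -> {poly F}, forall a, a \in L -> P %| ('X - a%:P) * u a - 1.
Proof.
move=> HL.
apply: (@fin_all_exists _ (fun _ => {poly F}) (fun a v => a \in L -> P %| ('X - a%:P) * v - 1)) => a.
case: (boolP (a \in L)) => aL; last by exists 0.
have : coprimep ('X - a%:P) P by rewrite coprimep_sym coprimep_XsubC HL.
case/Bezout_eq1_coprimepP => -[u1 u2] /= E; exists u1 => _.
have -> : ('X - a%:P) * u1 - 1 = - (u2 * P).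
  by rewrite -E mulrC opprD addrA subrr add0r.
by rewrite dvdpNr dvdp_mull.
Qed.

Lemma coprime_PX (P : {poly F}) (S : {set F}) :
  (forall b, b \in S -> ~~ root P b) -> coprimep P (PX S).
Proof.
move=> HS; rewrite /PX; apply: (big_ind (coprimep P)).
- exact: coprimep1.
- by move=> x y cx cy; rewrite coprimepMr cx cy.
- by move=> b bS; rewrite coprimep_XsubC HS.
Qed.
End Gen.

Section Low.
Variables (K F : finFieldType) (f : {rmorphism K -> F}).

Lemma lower_bound (L : {set F}) (P : {poly F}) (c : {ffun F -> K}) :
  goppa_code f L P c -> c != 0 -> (size P <= hweight c)%N.
Proof.
move=> [Hsupp [u [Hu Hdiv]]] cnz.
set S := [set a | c a != 0].
have SL : S \subset L.
  apply/subsetP => a; rewrite inE; apply: contraR => aL; rewrite Hsupp //.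
have Hc : forall a, a \in L -> a \notin S -> f (c a) = 0.
  by move=> a _; rewrite inE negbK => /eqP ->; rewrite rmorph0.
have := key_cong Hu SL Hc.
rewrite (dvdp_subr _ (dvdp_mull _ Hdiv)) => HR.
have [a0 a0S] : exists a0, a0 \in S.
  apply/existsP; apply: contraR cnz => /existsPn H; apply/eqP/ffunP => a.
  by have := H a; rewrite inE negbK ffunE => /eqP.
apply: (leq_trans (dvdp_leq _ HR)); last exact: size_R.
apply/eqP => R0; have := eval_R (fun a => f (c a)) a0S; rewrite R0 horner0.
move/esym/eqP; rewrite mulf_eq0 (negbTE (PX_nz_at _ _)) orbF fmorph_eq0.
by move: a0S; rewrite inE => /negbTE ->.
Qed.
End Low.
Section Fib.
Variable F : finFieldType.

Lemma card_roots (p : {poly F}) : p != 0 -> (#|[set x | root p x]| < size p)%N.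
Proof.
move=> pnz; rewrite cardE; apply: max_poly_roots => //; last exact: enum_uniq.
by apply/allP => x; rewrite mem_enum inE.
Qed.

Lemma card_fib n (y : F) : (0 < n)%N -> (#|[set a : F | a ^+ n == y]| <= n)%N.
Proof.
move=> n0; have pnz : 'X^n - y%:P != 0.
  by rewrite -size_poly_eq0 size_XnsubC.
have := card_roots pnz; rewrite size_XnsubC // ltnS => H.
apply: leq_trans H; apply: subset_leq_card; apply/subsetP => a.
by rewrite !inE rootE !hornerE subr_eq0.
Qed.

Variable t : nat.
Hypothesis t1 : (1 < t)%N.
Hypothesis cardF : #|F| = (t ^ 2)%N.

Lemma norm_unit (a : F) : a != 0 -> (a ^+ t.+1) ^+ t.-1 = 1.
Proof.
move=> anz; have := expf_card a.
have -> : #|F| = ((t.+1 * t.-1).+1)%N.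
  rewrite cardF; case: t t1 => // t' _ /=; rewrite mulnC; lia.
by rewrite exprS -exprM -{3}(mulr1 a) => /(mulfI anz).
Qed.

Lemma fib_full (tau : F) : tau != 0 -> tau ^+ t = tau ->
  #|[set a : F | a ^+ t.+1 == tau]| = t.+1.
Proof.
move=> tnz tt.
set Rt := [set y : F | (y != 0) && (y ^+ t.-1 == 1)].
have cRt : (#|Rt| <= t.-1)%N.
  have pnz : 'X^(t.-1) - 1 != 0 :> {poly F}.
    by rewrite -size_poly_eq0 -polyC1 size_XnsubC //; case: t t1 => // [[]].
  have := card_roots pnz; rewrite -polyC1 size_XnsubC; last by case: t t1 => // [[]].
  move=> H; rewrite ltnS in H; apply: leq_trans _ H; apply: subset_leq_card; apply/subsetP => a.
  by rewrite !inE rootE !hornerE subr_eq0 => /andP[].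
set fib := fun y : F => #|[set a : F | a ^+ t.+1 == y]|.
have cU : #|[set~ (0:F)]| = (t.+1 * t.-1)%N.
  rewrite cardsC1 cardF; case: t t1 => // t' _ /=; lia.
have Hsum : (t.+1 * t.-1 = \sum_(y in Rt) fib y)%N.
  have -> : (t.+1 * t.-1 = \sum_(a in [set~ (0:F)%R]) 1)%N by rewrite sum1_card cU.
  rewrite (partition_big (fun a => a ^+ t.+1) (mem Rt)) /=; last first.
    move=> a; rewrite !inE => anz; rewrite expf_neq0 //= norm_unit //.
  apply: eq_bigr => y; rewrite inE => /andP[ynz _].
  rewrite /fib -sum1_card; apply: eq_bigl => a; rewrite !inE.
  by case: eqP => //= ->; rewrite expr0n /= eq_sym (negbTE ynz).
have Hle : forall y, (fib y <= t.+1)%N by move=> y; exact: card_fib.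
have tRt : tau \in Rt.
  rewrite inE tnz /=; apply/eqP; apply: (mulfI tnz); rewrite mulr1 -exprS.
  by case: t t1 tt.
have := @leqif_sum F (mem Rt) (fun y => fib y == t.+1) fib (fun _ => t.+1).
case=> [y _|Hl Heq]; first by apply/leqif_eq/Hle.
have : [forall (y | y \in Rt), fib y == t.+1].
  rewrite -Heq; apply/eqP; apply/anti_leq; rewrite Hl /= sum_nat_const -Hsum.
  by rewrite mulnC leq_mul2l cRt orbT.
by move/forallP/(_ tau); rewrite tRt => /eqP.
Qed.
End Fib.
Section Constr.
Variables (K F : finFieldType) (f : {rmorphism K -> F}) (t i : nat) (T0 : {set K}).
Hypothesis t1 : (1 < t)%N.
Hypothesis cardF : #|F| = (t ^ 2)%N.
Hypothesis tchar : (t%:R : F) = 0.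
Hypothesis T0nz : forall s, s \in T0 -> s != 0.
Hypothesis T0n1 : forall s, s \in T0 -> s != -1.
Hypothesis T0t : forall s, s \in T0 -> f s ^+ t = f s.
Hypothesis cT0 : #|T0| = i.

Definition SS : {set F} := [set a : F | (a == 0) || [exists s in T0, a ^+ t.+1 == f s]].
Definition hP : {poly F} := \prod_(s in T0) ('X^(t.+1) - (f s)%:P).

Lemma S_card : #|SS| = (i * t.+1).+1.
Proof.
set E := [set a : F | [exists s in T0, a ^+ t.+1 == f s]].
have -> : SS = 0 |: E by apply/setP => a; rewrite !inE.
rewrite cardsU1.
have -> : (0:F) \notin E.
  rewrite inE; apply/existsP => -[s /andP[sT /eqP]]; rewrite expr0n /= => /esym/eqP.
  by rewrite fmorph_eq0 (negbTE (T0nz sT)).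
rewrite add1n; congr _.+1.
pose p (a : F) : K := if [pick s in T0 | a ^+ t.+1 == f s] is Some s then s else 0.
rewrite -sum1_card (partition_big p (mem T0)) /=; last first.
  move=> a; rewrite inE /p; case: pickP => [s /andP[]//|H /existsP[s /andP[sT /eqP es]]].
  by have := H s; rewrite sT es eqxx.
rewrite -cT0 -sum_nat_const; apply: eq_bigr => s sT.
rewrite -(fib_full t1 cardF (tau := f s)) ?fmorph_eq0 ?T0nz ?T0t //.
rewrite -sum1_card; apply: eq_bigl => a; rewrite !inE /p.
case: pickP => [s' /andP[s'T /eqP es']|H].
  apply/andP/eqP => [[_ /eqP <-]|e]; first by rewrite es'.
  split; first by apply/existsP; exists s'; rewrite s'T es' eqxx.
  by apply/eqP/(fmorph_inj f); rewrite -es' e.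
apply/andP/eqP => [[/existsP[s' /andP[s'T /eqP es']] /eqP e]|e].
  by have := H s'; rewrite s'T es' eqxx.
by have := H s; rewrite sT e eqxx.
Qed.

Lemma hP_monic : hP \is monic.
Proof. by apply: monic_prod => s _; apply: monicXnsubC. Qed.

Lemma size_hP : size hP = (i * t.+1).+1.
Proof.
rewrite /hP size_prod; last by move=> s _; rewrite -size_poly_eq0 size_XnsubC.
rewrite (eq_bigr (fun _ => t.+2)); last by move=> s _; rewrite size_XnsubC.
rewrite sum_nat_const -[X in (_ - X)%N]/#|T0| cT0; lia.
Qed.

Lemma root_XhP a : a \in SS -> root ('X * hP) a.
Proof.
rewrite inE => /orP[/eqP->|/existsP[s /andP[sT /eqP es]]].
  by rewrite rootM rootX eqxx.
rewrite rootM; apply/orP; right; rewrite /hP rootE horner_prod.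
apply/prodf_eq0; exists s => //.
by rewrite !hornerE es subrr.
Qed.

Lemma PX_S : PX SS = 'X * hP.
Proof.
have H1 : all (root ('X * hP)) (enum SS).
  by apply/allP => a; rewrite mem_enum; apply: root_XhP.
have H2 : uniq_roots (enum SS) by rewrite uniq_rootsE enum_uniq.
have [q Hq] := uniq_roots_prod_XsubC H1 H2.
rewrite big_enum /= -/(PX SS) in Hq.
have mXh : 'X * hP \is monic by rewrite monicMl ?monicX ?hP_monic.
have qnz : q != 0 by apply/eqP => q0; move: (monic_neq0 mXh); rewrite Hq q0 mul0r eqxx.
have szX : size ('X * hP) = (size hP).+1.
  by rewrite size_monicM ?monicX ?size_polyX -?size_poly_eq0 ?size_hP.
have : size q = 1%N.
  have E : size (q * PX SS) = (size hP).+1 by rewrite -Hq szX.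
  move: E; rewrite size_mul //; last exact: monic_neq0 (monic_PX SS).
  have := size_PX SS; rewrite /= => ->.
  rewrite S_card size_hP; case: (size q) => [|[|n]] //=; lia.
move/eqP/size_poly1P => [c cnz qc].
have E2 : lead_coef (q * PX SS) = 1 by rewrite -Hq (monicP mXh).
move: E2; rewrite lead_coef_Mmonic; last exact: monic_PX.
rewrite qc lead_coefC => c1.
by rewrite Hq qc c1 mul1r.
Qed.

Lemma S0 : (0:F) \in SS.
Proof. by rewrite inE eqxx. Qed.

Lemma PXa0 : PX (SS :\ 0) = hP.
Proof.
have := PX_S; rewrite (PX_D1 S0) subr0 => E.
apply: (mulfI (x := 'X)); last by rewrite E.
by rewrite -size_poly_eq0 size_polyX.
Qed.

Lemma PXa_val a s : s \in T0 -> a ^+ t.+1 = f s ->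
  (PX (SS :\ a)).[a] = f s * f (\prod_(r in T0 :\ s) (s - r)).
Proof.
move=> sT es.
have aS : a \in SS by rewrite inE; apply/orP; right; apply/existsP; exists s; rewrite sT es eqxx.
set W := \sum_(j < t.+1) ('X^((t.+1).-1 - j) * (a%:P) ^+ j).
set hs := \prod_(r in T0 :\ s) ('X^(t.+1) - (f r)%:P).
have Eh : hP = ('X - a%:P) * W * hs.
  rewrite /hP (big_setD1 s sT) /= -/hs -es rmorphXn /= -subrXX.
  by [].
have E : PX (SS :\ a) = 'X * W * hs.
  apply: (mulfI (x := 'X - a%:P)); first by rewrite polyXsubC_eq0.
  by rewrite -PX_D1 // PX_S Eh !mulrA [_ * 'X]mulrC.
rewrite E !hornerM hornerX.
have -> : W.[a] = a ^+ t.
  rewrite /W horner_sum (eq_bigr (fun _ => a ^+ t)); last first.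
    move=> j _; rewrite hornerM hornerXn horner_exp hornerC -exprD subnK //.
    by rewrite -ltnS; case: j.
  rewrite sumr_const card_ord mulrS -mulr_natr tchar mulr0 addr0 //.
have -> : hs.[a] = f (\prod_(r in T0 :\ s) (s - r)).
  rewrite /hs horner_prod rmorph_prod; apply: eq_bigr => r _.
  by rewrite !hornerE es rmorphB.
by rewrite -exprS es.
Qed.

Definition cK (a : F) : K :=
  if a == 0 then (\prod_(s in T0) (- s))^-1
  else if [pick s in T0 | a ^+ t.+1 == f s] is Some s
       then (s + 1) ^+ i / (s * \prod_(r in T0 :\ s) (s - r)) else 0.

Lemma G6_val a s : a ^+ t.+1 = f s -> (G6 F t).[a] = f (s + 1).
Proof. by move=> es; rewrite /G6 !hornerE es rmorphD rmorph1. Qed.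

Lemma c_ident a : a \in SS -> f (cK a) * (PX (SS :\ a)).[a] = ((G6 F t).[a]) ^+ i.
Proof.
rewrite /cK; case: eqP => [->|anz] aS.
  rewrite PXa0 /hP horner_prod /G6 !hornerE expr0n /= add0r expr1n.
  have -> : \prod_(s in T0) ('X^(t.+1) - (f s)%:P).[0] = \prod_(s in T0) - f s.
    by apply: eq_bigr => s _; rewrite !hornerE expr0n /= sub0r.
  rewrite fmorphV rmorph_prod; under eq_bigr do rewrite rmorphN.
  apply: mulVf; apply/prodf_neq0 => s sT; rewrite oppr_eq0 fmorph_eq0.
  exact: T0nz.
case: pickP => [s /andP[sT /eqP es]|H]; last first.
  move: aS; rewrite inE => /orP[/eqP//|/existsP[s /andP[sT /eqP es]]].
  by have := H s; rewrite sT es eqxx.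
rewrite (PXa_val sT es) (G6_val es) fmorph_div -rmorphM divfK ?rmorphXn //.
rewrite fmorph_eq0 mulf_neq0 ?(T0nz sT) //; apply/prodf_neq0 => r.
by rewrite !inE subr_eq0 eq_sym => /andP[].
Qed.

Lemma G6nz a : a \in SS -> (G6 F t).[a] != 0.
Proof.
rewrite inE => /orP[/eqP->|/existsP[s /andP[sT /eqP es]]].
  by rewrite /G6 !hornerE expr0n /= add0r oner_eq0.
rewrite (G6_val es) fmorph_eq0 addr_eq0; exact: T0n1.
Qed.

Lemma cKnz a : a \in SS -> cK a != 0.
Proof.
move=> aS; apply/eqP => c0; have := c_ident aS; rewrite c0 rmorph0 mul0r.
by move/esym/eqP; rewrite expf_eq0 (negbTE (G6nz aS)) andbF.
Qed.

Lemma upper : exists2 c, goppa_code f (L6 F t) (G6 F t ^+ i) c &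
  (c != 0) /\ hweight c = (i * t.+1).+1.
Proof.
set P := G6 F t ^+ i.
pose c := [ffun a => if a \in SS then cK a else 0].
have SL : SS \subset L6 F t by apply/subsetP => a aS; rewrite inE G6nz.
have nrS : forall b, b \in SS -> ~~ root P b.
  by move=> b bS; rewrite rootE horner_exp expf_eq0 (negbTE (G6nz bS)) andbF.
have nrL : forall b, b \in L6 F t -> ~~ root P b.
  by move=> b; rewrite inE => bL; rewrite rootE horner_exp expf_eq0 (negbTE bL) andbF.
have [u Hu] := u_exists nrL.
have Hc : forall a, a \in L6 F t -> a \notin SS -> f (c a) = 0.
  by move=> a _ aS; rewrite ffunE (negbTE aS) rmorph0.
have HR : \sum_(a in SS) f (c a) *: PX (SS :\ a) = P.
  apply/eqP; rewrite -subr_eq0; apply/eqP.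
  apply: (@roots_geq_poly_eq0 _ _ (enum SS)); last 2 first.
  - exact: enum_uniq.
  - rewrite -cardE; apply: (leq_trans (size_polyD _ _)); rewrite geq_max size_R.
    rewrite size_polyN; apply: (leq_trans (leqSpred _)).
    rewrite /P size_exp /G6 -polyC1 size_XnaddC // S_card.
    by rewrite mulnC.
  apply/allP => b; rewrite mem_enum => bS; rewrite rootE hornerD hornerN.
  rewrite eval_R // ffunE bS c_ident // horner_exp subrr eqxx //.
have [Hsupp Hw] : (forall a, a \notin L6 F t -> c a = 0) /\ [set a | c a != 0] = SS.
  split; first by move=> a aL; rewrite ffunE; case: ifP => // aS; move: aL; rewrite (subsetP SL a aS).
  apply/setP => a; rewrite [in LHS]inE ffunE.
  by case: ifP => aS; [rewrite cKnz | rewrite eqxx].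
exists c.
  split; first exact: Hsupp.
  exists u; split => //.
  have := key_cong Hu SL Hc; rewrite HR => H.
  have := dvdp_add H (dvdpp P); rewrite subrK Gauss_dvdpr //.
  exact: coprime_PX.
split; last by rewrite /hweight Hw S_card.
apply/eqP => /ffunP /(_ 0); rewrite !ffunE S0 => /eqP; apply/negP; exact: cKnz S0.
Qed.
End Constr.
Lemma size_G6i (F : finFieldType) (t i : nat) :
  size (G6 F t ^+ i) = (i * t.+1).+1.
Proof.
have m : G6 F t ^+ i \is monic by apply: monic_exp; rewrite /G6 -polyC1 monicXnaddC.
rewrite (polySpred (monic_neq0 m)) size_exp /G6 -polyC1 size_XnaddC //.
by rewrite mulnC.
Qed.

Lemma frob_iter (K : finFieldType) (s : K) l : s ^+ (#|K| ^ l) = s.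
Proof.
elim: l => [|l IH]; first by rewrite expr1.
rewrite expnSr exprM IH; exact: expf_card.
Qed.

Unset Implicit Arguments.
Set Strict Implicit.

Theorem theorem1 (p k l : nat) (K F : finFieldType) (f : {rmorphism K -> F}) (i : nat) :
  prime p -> (0 < k)%N -> (1 <= l)%N ->
  #|K| = (p ^ k)%N -> #|F| = (((p ^ k) ^ l) ^ 2)%N ->
  (1 < i)%N -> (i < (p ^ k).-1)%N ->
  min_distance (goppa_code f (L6 F ((p ^ k) ^ l)) (G6 F ((p ^ k) ^ l) ^+ i))
               (i * ((p ^ k) ^ l).+1).+1.
Proof.
move=> pp k0 l1 cK cF i1 iq.
set q := (p ^ k)%N in cK cF iq *.
set t := (q ^ l)%N in cF *.
have q1 : (1 < q)%N by lia.
have t1 : (1 < t)%N.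
  apply: (leq_trans q1); rewrite /t -[X in (X <= _)%N]expn1; apply: leq_pexp2l => //; lia.
have tchar : (t%:R : F) = 0.
  have pc : p \in [pchar F].
    apply: (card_finPcharP (n := (k * l * 2)%N)) => //.
    by rewrite cF /t /q -!expnM mulnA.
  rewrite /t /q -expnM natrX (pcharf0 pc) expr0n.
  have -> : ((k * l)%N == 0%N) = false by apply/eqP; lia.
  by [].
set A := [set~ (0:K)] :\ (-1).
have cA : (i <= #|A|)%N.
  have := cardsD1 (-1) [set~ (0:K)]; rewrite cardsC1 cK -/A !inE oppr_eq0 oner_eq0 /=.
  by move=> E; move: iq; rewrite E add1n ltnS.
set T0 := [set x in take i (enum A)].
have T0A : forall s, s \in T0 -> s \in A.
  by move=> s; rewrite inE => /mem_take; rewrite mem_enum.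
have T0nz : forall s, s \in T0 -> s != 0.
  by move=> s /T0A; rewrite !inE => /andP[_].
have T0n1 : forall s, s \in T0 -> s != -1.
  by move=> s /T0A; rewrite !inE => /andP[].
have T0t : forall s, s \in T0 -> f s ^+ t = f s.
  by move=> s _; rewrite -rmorphXn /t -cK frob_iter.
have cT0 : #|T0| = i.
  rewrite cardsE; move/card_uniqP: (take_uniq i (enum_uniq (mem A))) => ->.
  by rewrite size_takel // -cardE.
split.
  exact: (upper t1 cF tchar T0nz T0n1 T0t cT0).
by move=> c Hc cnz; have := lower_bound Hc cnz; rewrite size_G6i.
Qed.
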